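(* For $n\ge 1$ and $1\le p\le n$ let $b(n,p)$ be the number of $\alpha\in\mathcal{ORCT}^*_n$ with $|\mathrm{Im}\,\alpha|=p$ and exactly one fixed point, and set $b(n,0)=0$ for all $n\ge 0$. Then $b(n,1)=n$ for all $n\ge1$, $b(2,2)=0$, and for all $n\ge p\ge 2$, $$b(n,p)=(n-p+1)\binom{n-2}{p-1}+b(n-2,p-2).$$
   Context: $X_n=\{1,2,\dots,n\}$ with its usual order; maps are written on the right ($x\alpha$). A map $\alpha:X_n\to X_n$ is order-reversing if $x\le y$ implies $x\alpha\ge y\alpha$, and a contraction if $|x\alpha-y\alpha|\le|x-y|$ for all $x,y$. $\mathcal{ORCT}^*_n$ is the set of all order-reversing contractions $X_n\to X_n$ defined on all of $X_n$ (this includes the constant maps). A fixed point of $\alpha$ is $x$ with $x\alpha=x$. Binomial coefficients $\binom{a}{b}$ with $b>a\ge0$ are $0$. *)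

(* Defs.v *)
(* X_n = {1..n} is modelled by 'I_n = {0..n-1} (shift by one,
   which preserves order, distances and fixed points). *)
From mathcomp Require Import all_boot.
Set Implicit Arguments. Unset Strict Implicit. Unset Printing Implicit Defensive.

Definition distn (a b : nat) : nat := maxn a b - minn a b.

Definition orct (n : nat) (f : {ffun 'I_n -> 'I_n}) : bool :=
  [forall x : 'I_n, forall y : 'I_n,
     ((x <= y) ==> (f y <= f x)) && (distn (f x) (f y) <= distn x y)].

Definition rank_of (n : nat) (f : {ffun 'I_n -> 'I_n}) : nat :=
  #|[set f x | x : 'I_n]|.

Definition nfix (n : nat) (f : {ffun 'I_n -> 'I_n}) : nat :=
  #|[set x : 'I_n | f x == x]|.

Definition b (n p : nat) : nat :=
  if p == 0 then 0 else
  #|[set f : {ffun 'I_n -> 'I_n} | [&& orct f, rank_of f == p & nfix f == 1]]|.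

(* Main.v *)
Require Import Defs.
From mathcomp Require Import all_boot zify.

Fixpoint Hr (m q A : nat) : nat :=
  match m with
  | 0 => (q == 0) && (A == 0)
  | m'.+1 => if A is A'.+1 then
               Hr m' q A' + (if q is q'.+1 then (if A' is A''.+1 then Hr m' q' A'' else 0) else 0)
             else 'C(m'.+1, q)
  end.

Lemma HrS m q A : Hr m.+1 q A.+1 =
  Hr m q A + (if q is q'.+1 then (if A is A'.+1 then Hr m q' A' else 0) else 0).
Proof. by []. Qed.

Lemma Hr_A0 m q : Hr m q 0 = 'C(m, q).
Proof. by case: m => [|m] /=; rewrite ?bin0n ?andbT. Qed.

Lemma Hr_q0 m A : Hr m 0 A = (A <= m).
Proof.
elim: m A => [|m IH] [|A] //=.
by rewrite IH addn0.
Qed.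

Lemma HC m q A : A <= m.+1 + q ->
  Hr m.+1 q.+1 A.+1 + Hr m q A = 'C(m.+1, q.+1).
Proof.
elim: m q A => [|m IH] q A hA.
- rewrite HrS; move: hA; by case: q A => [|q] [|[|A]].
- rewrite HrS; case: A hA => [|A] hA.
  + by rewrite addn0 !Hr_A0 [in RHS]binS.
  + rewrite (HrS m q A).
    have h1 := IH q A ltac:(lia).
    suff h2 : Hr m.+1 q A + (if q is q'.+1 then (if A is A'.+1 then Hr m q' A' else 0) else 0) = 'C(m.+1, q).
      by rewrite [in RHS]binS; lia.
    case: q hA h1 => [|q] hA h1.
      by rewrite !addn0 Hr_q0 bin0; apply/eqP; rewrite eqb1; lia.
    case: A hA h1 => [|A] hA h1; first by rewrite addn0 Hr_A0.
    by rewrite IH; last lia.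
Qed.


Definition ones (s : seq bool) := count id s.
Definition hit A (s : seq bool) := has (fun x => x + ones (take x s) == A) (iota 0 (size s).+1).
Fixpoint bl m : seq (seq bool) :=
  if m is m'.+1 then [seq false :: s | s <- bl m'] ++ [seq true :: s | s <- bl m'] else [:: [::]].

Lemma hit_nil A : hit A [::] = (A == 0).
Proof. by rewrite /hit /= orbF eq_sym. Qed.

Lemma iota0S n : iota 0 n.+1 = 0 :: map S (iota 0 n).
Proof. by rewrite [LHS]/= -[1]/(1 + 0) iotaDl. Qed.
Lemma hit_cons A b s : hit A (b :: s) = (A == 0) || ((b < A) && hit (A - b.+1) s).
Proof.
have hc : forall (a : pred nat) x l, has a (x :: l) = a x || has a l by [].
rewrite [hit A _]/hit (_ : size (b :: s) = (size s).+1) // iota0S hc has_map take0 eq_sym addn0.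
congr (_ || _).
case: (ltnP b A) => hb; rewrite ?andTb ?andFb /hit.
  apply: eq_has => y /=; rewrite /ones /=; apply/eqP/eqP; lia.
apply/hasP => -[y _] /=; rewrite /ones /=; move/eqP; lia.
Qed.

Lemma hit0 s : hit 0 s.
Proof. by case: s => [|b s]; rewrite ?hit_nil ?hit_cons. Qed.

Lemma count_false (T : Type) (a : pred T) l : (forall x, a x = false) -> count a l = 0.
Proof. by move=> h; elim: l => //= x l ->; rewrite h. Qed.

Lemma Hc m q A : count (fun s => (ones s == q) && hit A s) (bl m) = Hr m q A.
Proof.
elim: m q A => [|m IH] q A.
  by rewrite /= hit_nil eq_sym addn0 /ones /=.
rewrite [bl _]/= count_cat !count_map.
have e0 : forall q', count (fun s => (ones s == q')) (bl m) = 'C(m, q').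
  by move=> q'; rewrite -Hr_A0 -IH; apply: eq_count => s; rewrite hit0 andbT.
case: A => [|A].
  rewrite Hr_A0 [X in X + _](_ : _ = 'C(m, q)); last first.
    by rewrite -e0; apply: eq_count => s /=; rewrite hit0 andbT.
  case: q => [|q].
    rewrite [X in _ + X]count_false ?addn0 ?bin0 //.
  rewrite [X in _ + X](_ : _ = 'C(m, q)) ?binS //.
  by rewrite -e0; apply: eq_count => s /=; rewrite hit0 /ones /= eqSS andbT.
rewrite HrS [X in X + _](_ : _ = Hr m q A); last first.
  by rewrite -IH; apply: eq_count => s /=; rewrite hit_cons /= subn1.
congr (_ + _).
case: q => [|q].
  by rewrite count_false // => s /=; rewrite /ones /=.
case: A => [|A].
  by rewrite count_false // => s /=; rewrite hit_cons /= andbF.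
rewrite -IH; apply: eq_count => s /=.
by rewrite hit_cons /ones /= eqSS subSS subn1.
Qed.

Lemma mem_bl m s : (s \in bl m) = (size s == m).
Proof.
elim: m s => [|m IH] [|b s] //=.
  rewrite (_ : (0 == m.+1) = false) //; apply/negbTE.
  by rewrite mem_cat; apply/norP; split; apply/mapP => -[].
rewrite eqSS mem_cat; case: b.
  rewrite (negbTE (_ : true :: s \notin [seq false :: s | s <- bl m])) /=; last by apply/mapP => -[].
  by rewrite mem_map ?IH // => x y [].
rewrite (negbTE (_ : false :: s \notin [seq true :: s | s <- bl m])) ?orbF; last by apply/mapP => -[].
by rewrite mem_map ?IH // => x y [].
Qed.

Lemma uniq_bl m : uniq (bl m).
Proof.
elim: m => [|m IH] //=.
rewrite cat_uniq !map_inj_uniq ?IH //= ?andbT; try by move=> x y [].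
by apply/hasP => -[x /mapP [y _ ->] /mapP [z _]].
Qed.


Definition dec m (c : nat * seq bool) : {ffun 'I_m.+1 -> 'I_m.+1} :=
  [ffun i : 'I_m.+1 => inord (c.1 - ones (take i c.2))].

Lemma dec_val m c i : c.1 < m.+1 -> val (dec m c i) = c.1 - ones (take i c.2).
Proof. by move=> h; rewrite ffunE; apply: inordK; apply: leq_ltn_trans (leq_subr _ _) h. Qed.

Lemma ones_take x y s : x <= y ->
  ones (take x s) <= ones (take y s) /\ ones (take y s) - ones (take x s) <= y - x.
Proof.
move=> hxy; have -> : y = x + (y - x) by lia.
move: (y - x) => d; rewrite takeD /ones count_cat.
have := count_size id (take d (drop x s)).
rewrite size_take; case: ltnP => h0 h; lia.
Qed.

Lemma ones_take_le x s : ones (take x s) <= ones s.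
Proof. by rewrite -{2}(cat_take_drop x s) /ones count_cat leq_addr. Qed.

Lemma orctP n (f : {ffun 'I_n -> 'I_n}) :
  reflect (forall x y : 'I_n, x <= y -> f y <= f x /\ distn (f x) (f y) <= distn x y) (orct f).
Proof.
apply: (iffP forallP) => [h x y hxy | h x].
  by have /forallP /(_ y) /andP [/implyP /(_ hxy) ? ?] := h x.
apply/forallP => y; apply/andP; split.
  by apply/implyP => hxy; case: (h x y hxy).
case: (leqP x y) => hxy; first by case: (h x y hxy).
have [_ h2] := h y x (ltnW hxy).
by move: h2; rewrite /distn maxnC minnC [maxn x y]maxnC [minn x y]minnC.
Qed.

Lemma dec_orct m c : c.1 < m.+1 -> ones c.2 <= c.1 -> orct (dec m c).
Proof.
move=> h1 h2; apply/orctP => x y hxy; rewrite !dec_val //.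
have [a b] := ones_take x y c.2 hxy.
have := ones_take_le y c.2.
rewrite /distn; split; lia.
Qed.

Lemma ivt s k : k <= ones s -> exists2 i, i <= size s & ones (take i s) = k.
Proof.
elim: s k => [|b s IH] k.
  by rewrite /ones /= leqn0 => /eqP ->; exists 0.
case: k => [|k] hk; first by exists 0.
case: b hk => hk.
  have [i hi e] := IH k hk.
  by exists i.+1 => //; rewrite /ones /= -/(ones _) e.
have [i hi e] := IH k.+1 hk.
by exists i.+1 => //; rewrite /ones /= -/(ones _) e.
Qed.

Lemma dec_rank m c : c.1 < m.+1 -> ones c.2 <= c.1 -> size c.2 = m ->
  rank_of (dec m c) = (ones c.2).+1.
Proof.
move=> h1 h2 h3; rewrite /rank_of.
have -> : [set dec m c x | x : 'I_m.+1] =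
          [set (inord (c.1 - k) : 'I_m.+1) | k : 'I_(ones c.2).+1].
  apply/setP => y; apply/imsetP/imsetP => -[x _ ->].
    have hx : ones (take x c.2) < (ones c.2).+1 by rewrite ltnS ones_take_le.
    by exists (Ordinal hx) => //; apply: val_inj; rewrite dec_val // /= inordK //; lia.
  have hk : x <= ones c.2 by rewrite -ltnS.
  have [i hi e] := ivt c.2 x hk.
  have hi' : i < m.+1 by rewrite ltnS -h3.
  by exists (Ordinal hi') => //; apply: val_inj; rewrite dec_val //= e inordK //; lia.
rewrite card_imset ?card_ord // => k1 k2 /(congr1 (@nat_of_ord m.+1)).
have hv : forall k : 'I_(ones c.2).+1, nat_of_ord (inord (c.1 - k) : 'I_m.+1) = c.1 - k.
  by move=> k; rewrite inordK //; lia.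
rewrite !hv => e; apply: val_inj => /=.
have := ltn_ord k1; have := ltn_ord k2; lia.
Qed.


Lemma nfix1 n (f : {ffun 'I_n -> 'I_n}) : orct f ->
  (nfix f == 1) = [exists x, f x == x].
Proof.
move=> /orctP ho; rewrite /nfix.
case: existsP => [[x0 /eqP hx0]|hn].
  have -> : [set x | f x == x] = [set x0]; last by rewrite cards1.
  apply/setP => y; rewrite !inE; apply/eqP/eqP => [hy|->//].
  apply: ord_inj; case: (leqP x0 y) => h.
    have [h1 _] := ho _ _ h; move: h1; rewrite hx0 hy; lia.
  have [h1 _] := ho _ _ (ltnW h); move: h1; rewrite hx0 hy => h1; lia.
have -> : [set x | f x == x] = set0; last by rewrite cards0.
by apply/setP => y; rewrite !inE; apply/negbTE/negP => hy; apply: hn; exists y.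
Qed.

Lemma dec_val' m c i : c.1 < m.+1 -> nat_of_ord (dec m c i) = c.1 - ones (take i c.2).
Proof. exact: dec_val. Qed.

Lemma dec_fix m c : c.1 < m.+1 -> ones c.2 <= c.1 -> size c.2 = m ->
  [exists x, dec m c x == x] = hit c.1 c.2.
Proof.
move=> h1 h2 h3; apply/existsP/hasP => [[x /eqP /(congr1 (@nat_of_ord _))]|[x]].
  rewrite dec_val' // => e; exists (nat_of_ord x).
    by rewrite mem_iota h3 /= ltn_ord.
  apply/eqP; have := ones_take_le x c.2; lia.
rewrite mem_iota h3 /= => hx /eqP e.
exists (Ordinal hx); apply/eqP/ord_inj; rewrite dec_val' //=.
have := ones_take_le x c.2; lia.
Qed.

Definition bits m (f : {ffun 'I_m.+1 -> 'I_m.+1}) : seq bool :=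
  [seq f (inord i) != f (inord i.+1) | i <- iota 0 m].

Arguments bits {m} f.

Lemma size_bits m (f : {ffun 'I_m.+1 -> 'I_m.+1}) : size (bits f) = m.
Proof. by rewrite size_map size_iota. Qed.

Lemma orct_step m (f : {ffun 'I_m.+1 -> 'I_m.+1}) i : orct f -> i < m ->
  nat_of_ord (f (inord i)) = f (inord i.+1) + (f (inord i) != f (inord i.+1)).
Proof.
move=> /orctP ho hi.
have e1 : nat_of_ord (inord i : 'I_m.+1) = i by rewrite inordK //; lia.
have e2 : nat_of_ord (inord i.+1 : 'I_m.+1) = i.+1 by rewrite inordK //; lia.
have hle : (inord i : 'I_m.+1) <= (inord i.+1 : 'I_m.+1) by rewrite e1 e2.
have [h1 h2] := ho _ _ hle; move: h2; rewrite /distn e1 e2 => h2.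
case: eqP => [->|hne] /=; first by rewrite addn0.
have : nat_of_ord (f (inord i)) != f (inord i.+1) by apply/eqP => e; apply: hne; apply: ord_inj.
lia.
Qed.

Lemma orct_bits m (f : {ffun 'I_m.+1 -> 'I_m.+1}) : orct f -> forall i, i <= m ->
  nat_of_ord (f ord0) = f (inord i) + ones (take i (bits f)).
Proof.
move=> ho; elim=> [|i IH] hi.
  by rewrite take0 /ones /= addn0 (_ : inord 0 = ord0) //; apply: val_inj; rewrite /= inordK.
rewrite IH 1?ltnW // /bits -map_take take_iota (minn_idPl (ltnW hi)).
rewrite -map_take take_iota (minn_idPl hi).
rewrite (_ : iota 0 i.+1 = iota 0 i ++ [:: i]); last by rewrite -addn1 iotaD.
rewrite map_cat /ones count_cat /=.
rewrite (orct_step m f i ho hi); lia.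
Qed.

Lemma orct_dec m (f : {ffun 'I_m.+1 -> 'I_m.+1}) : orct f ->
  f = dec m (nat_of_ord (f ord0), bits f).
Proof.
move=> ho; apply/ffunP => x; apply: ord_inj; rewrite dec_val' //=.
have := orct_bits m f ho x (ltn_ord x); rewrite inord_val; lia.
Qed.

Lemma orct_ones m (f : {ffun 'I_m.+1 -> 'I_m.+1}) : orct f -> ones (bits f) <= f ord0.
Proof.
move=> ho; have := orct_bits m f ho m (leqnn m).
rewrite take_oversize ?size_bits //; lia.
Qed.

Lemma dec0 m c : c.1 < m.+1 -> nat_of_ord (dec m c ord0) = c.1.
Proof. by move=> h; rewrite dec_val' // take0 subn0. Qed.

Lemma bits_dec m c : c.1 < m.+1 -> ones c.2 <= c.1 -> size c.2 = m -> bits (dec m c) = c.2.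
Proof.
move=> h1 h2 h3; apply: (@eq_from_nth _ false); rewrite ?size_bits ?h3 // => i hi.
rewrite /bits (nth_map 0) ?size_iota // nth_iota // add0n.
rewrite -(inj_eq (@ord_inj _)) !dec_val' // !inordK; try lia.
rewrite (take_nth false); last by rewrite h3.
have := ones_take_le i.+1 c.2; rewrite (take_nth false); last by rewrite h3.
rewrite /ones -cats1 !count_cat /=.
move: h2; rewrite /ones => h2; case: (nth false c.2 i) => /= h; last by rewrite !addn0 eqxx.
apply/eqP; lia.
Qed.


Lemma count_allpairs (S T U : Type) (f : S -> T -> U) (Q : pred U) s t :
  count Q [seq f x y | x <- s, y <- t] = \sum_(x <- s) count (fun y => Q (f x y)) t.
Proof.
elim: s => [|x s IH]; first by rewrite big_nil.
by rewrite allpairs_cons count_cat count_map IH big_cons.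
Qed.

Lemma count_b m q : q <= m ->
  #|[set f : {ffun 'I_m.+1 -> 'I_m.+1} | [&& orct f, rank_of f == q.+1 & nfix f == 1]]|
  = \sum_(0 <= lo < m.+1 - q) Hr m q (lo + q).
Proof.
move=> hq.
pose codes := [seq (lo + q, s) | lo <- iota 0 (m.+1 - q), s <- bl m].
pose Q := fun c : nat * seq bool => (ones c.2 == q) && hit c.1 c.2.
have valid : forall c, c \in codes -> [/\ c.1 < m.+1, size c.2 = m & q <= c.1].
  move=> c /allpairsP [[lo s] [/= hlo hs ->]] /=.
  by move: hlo hs; rewrite mem_iota mem_bl => hlo /eqP hs; split => //; lia.
have uC : uniq (filter Q codes).
  apply: filter_uniq; apply: allpairs_uniq; rewrite ?iota_uniq ?uniq_bl //.
  by move=> [lo1 s1] [lo2 s2] _ _ /= [e1 ->]; congr pair; lia.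
pose L := map (dec m) (filter Q codes).
have uL : uniq L.
  rewrite map_inj_in_uniq // => c1 c2.
  rewrite !mem_filter => /andP [/andP [/eqP q1 _] /valid [v1 s1 w1]] /andP [/andP [/eqP q2 _] /valid [v2 s2 w2]] e.
  have e1 : c1.1 = c2.1 by rewrite -(dec0 m c1) // -(dec0 m c2) // e.
  have e2 : c1.2 = c2.2.
    have o1 : ones c1.2 <= c1.1 by rewrite q1.
    have o2 : ones c2.2 <= c2.1 by rewrite q2.
    have b1 := bits_dec m c1 v1 o1 s1.
    have b2 := bits_dec m c2 v2 o2 s2.
    by rewrite -b1 -b2 e.
  by move: e1 e2; case: c1 {v1 s1 q1 e w1} => ? ?; case: c2 {v2 s2 q2 w2} => ? ? /= -> ->.
have eqS : [set f : {ffun 'I_m.+1 -> 'I_m.+1} | [&& orct f, rank_of f == q.+1 & nfix f == 1]] =i L.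
  move=> f; rewrite inE; apply/idP/idP.
    move=> /and3P [ho hr hn].
    have hf := orct_dec m f ho.
    have hone := orct_ones m f ho.
    have hlt : nat_of_ord (f ord0) < m.+1 by [].
    apply/mapP; exists (nat_of_ord (f ord0), bits f) => //.
    have hQ : Q (nat_of_ord (f ord0), bits f).
      rewrite /Q /=; apply/andP; split.
        by move: hr; rewrite {1}hf dec_rank //= ?size_bits // eqSS.
      by rewrite -(dec_fix m (nat_of_ord (f ord0), bits f)) //= ?size_bits // -hf -nfix1.
    rewrite mem_filter hQ /=; apply/allpairsP.
    exists (nat_of_ord (f ord0) - q, bits f); rewrite /= mem_iota mem_bl size_bits eqxx.
    move: hQ; rewrite /Q /= => /andP [/eqP hb _].
    split => //; first by rewrite add0n ltn_sub2r // ltnS.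
    by congr pair; rewrite subnK // -hb.
  move=> /mapP [c]; rewrite mem_filter => /andP [/andP [/eqP hb hh] /valid [hv hs hw]] ->.
  have hle : ones c.2 <= c.1 by rewrite hb.
  rewrite dec_orct // dec_rank // hb eqxx /=.
  by rewrite nfix1 ?dec_orct // dec_fix.
rewrite (eq_card eqS) (card_uniqP uL) size_map size_filter count_allpairs.
rewrite /index_iota subn0; apply: eq_bigr => lo _.
by rewrite -Hc.
Qed.


Lemma bE m q : q <= m -> b m.+1 q.+1 = \sum_(0 <= lo < m.+1 - q) Hr m q (lo + q).
Proof. by move=> h; rewrite /b /= -count_b. Qed.

Lemma part1 n : 1 <= n -> b n 1 = n.
Proof.
case: n => [|m] // _; rewrite bE //.
rewrite (eq_big_nat _ _ (F2 := fun _ => 1)); last first.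
  by move=> lo /andP [_ h]; rewrite Hr_q0 addn0; move: h; rewrite subn0 ltnS => ->.
by rewrite sum_nat_const_nat !subn0 muln1.
Qed.

Lemma part3 n p : 2 <= p -> p <= n ->
     b n p = (n - p + 1) * 'C(n - 2, p - 1) + b (n - 2) (p - 2).
Proof.
case: n => [|m]; first by case: p.
case: p => [|[|q]] // _ hp.
case: q hp => [|q'] hp.
  case: m hp => [|m'] // _.
  rewrite bE // (_ : b (m'.+2 - 2) (2 - 2) = 0) // addn0.
  rewrite (eq_big_nat _ _ (F2 := fun _ => m')); last first.
    move=> lo /andP [_ h].
    have := HC m' 0 lo ltac:(lia); rewrite Hr_q0 bin1 addn1.
    have -> : (lo <= m') = true by apply/idP; lia.
    lia.
  by rewrite sum_nat_const_nat subn0 bin1; congr (_ * _); lia.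
case: m hp => [|[|m']] hp //.
rewrite bE; last lia.
rewrite (_ : m'.+3 - 2 = m'.+1) // (_ : q'.+3 - 2 = q'.+1) // bE; last lia.
rewrite (_ : m'.+3 - q'.+2 = m'.+1 - q') //.
rewrite (eq_big_nat _ _ (F2 := fun lo => 'C(m'.+1, q'.+2) + Hr m' q' (lo + q'))); last first.
  move=> lo /andP [_ h].
  have h1 := HC m'.+1 q'.+1 (lo + q'.+1) ltac:(lia).
  have h2 := HC m' q' (lo + q') ltac:(lia).
  rewrite !addnS in h1 h2 *.
  rewrite [in 'C(m'.+2, _)]binS in h1; lia.
rewrite big_split /= sum_nat_const_nat subn0; congr (_ + _).
by rewrite (_ : m'.+3 - q'.+3 = m'.+1 - q'.+1) //; congr (_ * _); lia.
Qed.

Theorem lemma3p8 :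
  (forall n : nat, 1 <= n -> b n 1 = n) /\
  b 2 2 = 0 /\
  (forall n p : nat, 2 <= p -> p <= n ->
     b n p = (n - p + 1) * 'C(n - 2, p - 1) + b (n - 2) (p - 2)).
Proof.
split; first exact: part1.
split; last exact: part3.
by rewrite (part3 2 2).
Qed.
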